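(* Let $A$ be the filtered boundary matrix of a Morse decomposition with respect to an admissible enumeration $\sigma_1,\dots,\sigma_n$, and let $B$ be any matrix obtained from $A$ by a finite sequence of operations, each adding some column $s$ to some column $j$ with $s<j$ (for instance any intermediate matrix of ConMat or of a complete column reduction). Let $j$ be a homogeneous column of $B$ and let $s<j$ be a nonzero column of $B$ with $B[\mathrm{low}_B(s),j]=1$. If adding column $s$ to column $j$ changes the pivot of column $j$, then column $s$ is homogeneous, $\sigma_s$ and $\sigma_j$ lie in the same Morse set, and $\mathrm{low}_B(s)=\mathrm{low}_B(j)$.
   Context: $K$ is a finite simplicial complex ($\tau\le\sigma$: $\tau$ is a face of $\sigma$; $\mathrm{cl}(\sigma)=\{\tau:\tau\le\sigma\}$). A multivector field $\mathcal V$ on $K$ is a partition of $K$ into convex sets $V$ (if $\sigma,\tau\in V$ and $\sigma\le\mu\le\tau$ then $\mu\in V$); $[\sigma]_{\mathcal V}$ is the part containing $\sigma$, $F_{\mathcal V}(\sigma)=[\sigma]_{\mathcal V}\cup\mathrm{cl}(\sigma)$, and a path is a sequence $\sigma_1,\dots,\sigma_r$ with $\sigma_k\in F_{\mathcal V}(\sigma_{k-1})$. A Morse decomposition indexed by a finite poset $(P,\le_P)$ is a partition $K=\bigsqcup_{p\in P}M_p$ such that every path from $M_p$ to $M_q$ has $q\le_P p$; $[\sigma]_P$ is the $p$ with $\sigma\in M_p$. An admissible enumeration is $\sigma_1,\dots,\sigma_n$ of all simplices of $K$ such that (a) for some linear extension $\le_{lin}$ of $\le_P$, $i\le j\Rightarrow[\sigma_i]_P\le_{lin}[\sigma_j]_P$;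 (b) if $\sigma_i$ is a proper face of $\sigma_j$ then $i<j$. The filtered boundary matrix $A$ is the $n\times n$ $\mathbb Z_2$-matrix with $A[i,j]=1$ iff $\sigma_i$ is a codimension-one face of $\sigma_j$; row/column $i$ represents $\sigma_i$. Adding column $s$ to column $j$ means replacing column $j$ by the mod-2 sum. For a nonzero column $j$ of a matrix $B$, its pivot $\mathrm{low}_B(j)$ is the largest $i$ with $B[i,j]=1$ (a zero column has no pivot). Column $j$ is homogeneous if nonzero and $\sigma_j$, $\sigma_{\mathrm{low}_B(j)}$ are in the same Morse set. ConMat reduction phase: for $j=1,\dots,n$, for $i=\mathrm{low}(j)$ down to $1$: if the current entry $(i,j)$ is $1$ and some homogeneous column $s<j$ has pivot $i$, add column $s$ to column $j$. A complete column reduction of a matrix is a finite sequence of additions of a column $s$ to a column $j$ with $s<j$ (no homogeneity restriction) ending in a matrix whose nonzero columns have pairwise distinct pivots. *)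

(* Defs.v *)
From HB Require Import structures.
From mathcomp Require Import all_boot all_order all_algebra.
Set Implicit Arguments. Unset Strict Implicit. Unset Printing Implicit Defensive.
Import Order.TTheory GRing.Theory.

(* Simplices of K are nonempty finite subsets of a finite vertex type V.
   The face relation tau <= sigma is set inclusion tau \subset sigma. *)
Section Defs.
Variable V : finType.
Implicit Types (K : {set {set V}}) (s t : {set V}).

Definition simplicial_complex K : Prop :=
  set0 \notin K /\
  forall s t, s \in K -> t \subset s -> t != set0 -> t \in K.

Definition cl K s : {set {set V}} := [set t in K | t \subset s].

Definition codim1_face s t : bool := (s \subset t) && (#|t| == #|s|.+1).

Definition convex_set (W : {set {set V}}) : Prop :=
  forall s m t : {set V}, s \in W -> t \in W -> s \subset m -> m \subset t -> m \in W.

Definition multivector_field K (mv : {set {set {set V}}}) : Prop :=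
  partition mv K /\ forall W, W \in mv -> convex_set W.

Definition Fmv K (mv : {set {set {set V}}}) s : {set {set V}} :=
  pblock mv s :|: cl K s.

Definition Frel K mv : rel {set V} := fun a b => b \in Fmv K mv a.

(* Morse decomposition indexed by the finite poset P, given by the map
   sigma |-> [sigma]_P (Morse set M_p = [set sigma in K | morse sigma == p]):
   every path from M_p to M_q satisfies q <=_P p. *)
Definition morse_decomposition {d} (P : finPOrderType d) K mv
    (morse : {set V} -> P) : Prop :=
  forall x (p : seq {set V}), x \in K ->
    path (Frel K mv) x p -> (morse (last x p) <= morse x)%O.

End Defs.

Definition linear_extension {d} (P : finPOrderType d) (lin : rel P) : Prop :=
  [/\ reflexive lin, antisymmetric lin, transitive lin, total lin
    & forall x y : P, (x <= y)%O -> lin x y].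

(* admissible enumeration sigma_1..sigma_n, here sig : 'I_n -> {set V}
   (0-based indices), a bijection onto K *)
Definition admissible_enumeration (V : finType) {d} (P : finPOrderType d)
    (K : {set {set V}}) (morse : {set V} -> P) n (sig : 'I_n -> {set V}) : Prop :=
  [/\ injective sig, forall s, s \in K <-> exists i, sig i = s,
      exists lin : rel P, linear_extension lin /\
        forall i j : 'I_n, i <= j -> lin (morse (sig i)) (morse (sig j))
    & forall i j : 'I_n, sig i \proper sig j -> i < j].

Definition boundary_matrix (V : finType) n (sig : 'I_n -> {set V}) : 'M['F_2]_n :=
  \matrix_(i, j) (if codim1_face (sig i) (sig j) then 1%R else 0%R).

Definition addcol n (B : 'M['F_2]_n) (s j : 'I_n) : 'M['F_2]_n :=
  \matrix_(i, k) (if k == j then (B i j + B i s)%R else B i k).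

Inductive reachable n (A : 'M['F_2]_n) : 'M['F_2]_n -> Prop :=
| reach_refl : reachable A A
| reach_step B (s j : 'I_n) : reachable A B -> s < j -> reachable A (addcol B s j).

Definition low n (B : 'M['F_2]_n) (j : 'I_n) : option 'I_n :=
  [pick i | (B i j != 0%R) && [forall k : 'I_n, (i < k) ==> (B k j == 0%R)]].

Definition homogeneous (V : finType) {d} (P : finPOrderType d)
    (morse : {set V} -> P) n (sig : 'I_n -> {set V}) (B : 'M['F_2]_n) (j : 'I_n) : Prop :=
  exists i, low B j = Some i /\ morse (sig j) = morse (sig i).

(* Main.v *)
Require Import Defs.
From HB Require Import structures.
From mathcomp Require Import all_boot all_order all_algebra.
Import Order.TTheory GRing.Theory.
Local Open Scope ring_scope.
Set Implicit Arguments.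

Lemma lowP n (B : 'M['F_2]_n) c l :
  B l c != 0 -> (forall k : 'I_n, (l < k)%N -> B k c = 0) -> low B c = Some l.
Proof.
move=> Hl Hk; rewrite /low; case: pickP => [x /andP[Hx /forallP Hf] | H].
  congr Some; apply/val_inj/eqP; rewrite eqn_leq; apply/andP; split; rewrite leqNgt.
    apply/negP => Hlt; by rewrite Hk ?eqxx in Hx.
  apply/negP => Hlt; move: (Hf l); rewrite Hlt /= => /eqP E.
  by rewrite E eqxx in Hl.
move: (H l); rewrite Hl /=; move/negbT/negP; case.
by apply/forallP => k; apply/implyP => Hlk; rewrite Hk.
Qed.

Lemma lowS n (B : 'M['F_2]_n) c l :
  low B c = Some l -> B l c != 0 /\ (forall k : 'I_n, (l < k)%N -> B k c = 0).
Proof.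
rewrite /low; case: pickP => // x /andP[Hx /forallP Hf] [<-]; split => // k Hk.
by move: (Hf k); rewrite Hk => /eqP.
Qed.

Arguments lowS {n B c l}.

Lemma reach_tri n (A B : 'M['F_2]_n) : reachable A B ->
  (forall r c, A r c != 0 -> (r < c)%N) -> forall r c, B r c != 0 -> (r < c)%N.
Proof.
move=> HR HA; elim: HR => {B} [//|B s j _ IH Hsj] r c.
rewrite /addcol mxE; case: (eqVneq c j) => [->|Hne]; last exact: IH.
case: (eqVneq (B r j) 0) => [H|H]; last by move=> _; exact: IH.
rewrite H add0r => /IH Hrs; exact: ltn_trans Hrs Hsj.
Qed.

Theorem proposition2 (V : finType) (d : Order.disp_t) (P : finPOrderType d)
    (K : {set {set V}}) (mv : {set {set {set V}}}) (morse : {set V} -> P)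
    (n : nat) (sig : 'I_n -> {set V}) (B : 'M['F_2]_n) (s j i : 'I_n) :
  simplicial_complex K ->
  multivector_field K mv ->
  morse_decomposition K mv morse ->
  admissible_enumeration K morse sig ->
  reachable (boundary_matrix sig) B ->
  homogeneous morse sig B j ->
  (s < j)%N ->
  low B s = Some i ->
  B i j = 1 ->
  low (addcol B s j) j <> low B j ->
  [/\ homogeneous morse sig B s, morse (sig s) = morse (sig j) & low B s = low B j].
Proof.
move=> _ _ _ [_ _ [lin [[_ Lanti Ltr _ _] Hlin]] Hprop] HR [l [Hlj Hml]] Hsj Hls Hij Hch.
have Htri : forall r c, B r c != 0 -> (r < c)%N.
  apply: (@reach_tri n (boundary_matrix sig) B HR) => r c; rewrite mxE.
  case: ifP => [/andP[Hsub /eqP Hc] _ | _]; last by rewrite eqxx.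
  apply: Hprop; rewrite properEcard Hsub Hc; exact: ltnSn.
have [Hl0 Hlz] := lowS Hlj.
have [Hi0 Hiz] := lowS Hls.
have Eil : i = l.
  apply/val_inj/eqP; rewrite eqn_leq; apply/andP; split; rewrite leqNgt.
    apply/negP => Hli; by move: (Hlz _ Hli); rewrite Hij => /eqP; rewrite oner_eq0.
  apply/negP => Hil; apply: Hch; rewrite Hlj; apply: lowP.
    by rewrite mxE eqxx (Hiz _ Hil) addr0.
  move=> k Hk; rewrite mxE eqxx (Hlz _ Hk) (Hiz k) ?addr0 //.
  exact: ltn_trans Hil Hk.
subst l.
have His := Htri _ _ Hi0.
have L1 : lin (morse (sig i)) (morse (sig s)) by apply: Hlin; exact: ltnW.
have L2 : lin (morse (sig s)) (morse (sig j)) by apply: Hlin; exact: ltnW.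
have Esj : morse (sig s) = morse (sig j).
  apply: Lanti; rewrite L2 /= Hml; exact: L1.
split => //; last by rewrite Hls Hlj.
by exists i; split => //; rewrite Esj.
Qed.
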